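(* Let $A_1,\dots,A_n$ ($n\ge 3$) be distinct points of a difference cograph such that $\mathcal{C}(A_1,A_2)=\mathcal{C}(A_2,A_3)=\dots=\mathcal{C}(A_{n-1},A_n)$. If $n$ is odd then $A_1+A_n=2A_{(n+1)/2}$; if $n$ is even then $A_1+A_n=A_{n/2}+A_{n/2+1}$. (In particular, for a chain $A,B,C$ one has $A+C=2B$, and for a chain $A,B,C,D$ one has $A+D=B+C$.)
   Context: A difference cograph has as points distinct elements either of $\mathbb{Z}$, with edge $\mathcal{C}(P,Q)=|P-Q|$, or of $\mathbb{Z}_m$ for some $m$, with edge $\mathcal{C}(P,Q)=\min|p-q|$ taken over integers $p\in P$, $q\in Q$ (the cosets); sums of points are computed in $\mathbb{Z}$ or $\mathbb{Z}_m$ respectively. *)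

(* Defs.v *)
From mathcomp Require Import all_boot all_algebra.
Set Implicit Arguments. Unset Strict Implicit. Unset Printing Implicit Defensive.
Import GRing.Theory Num.Theory.
Local Open Scope ring_scope.

Definition cZ (P Q : int) : nat := `|P - Q|%N.

(* An integer p is a representative of the coset P of Z_m (used for 1 < m). *)
Definition zm_rep (m : nat) (P : 'Z_m) (p : int) : bool :=
  (p %% m%:Z)%Z == (val P)%:Z.

(* Difference cograph on Z_m: C(P,Q) = d means d is the minimum of |p - q|
   over integers p in P, q in Q. *)
Definition cZm_is (m : nat) (P Q : 'Z_m) (d : nat) : Prop :=
  (exists p q : int, zm_rep P p /\ zm_rep Q q /\ `|p - q|%N = d) /\
  (forall p q : int, zm_rep P p -> zm_rep Q q -> (d <= `|p - q|%N)%N).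

(* Main.v *)
Require Import Defs.
From mathcomp Require Import all_boot all_algebra.
From mathcomp Require Import zify.
Import GRing.Theory Num.Theory.
Local Open Scope ring_scope.

Lemma gen_ap (V : zmodType) (n : nat) (A : nat -> V) (c : V) :
  (3 <= n)%N ->
  (forall i j : nat, (1 <= i <= n)%N -> (1 <= j <= n)%N -> A i = A j -> i = j) ->
  (forall i, (1 <= i < n)%N -> A i.+1 - A i = c \/ A i.+1 - A i = - c) ->
  (odd n -> A 1%N + A n = A (n.+1 %/ 2)%N *+ 2) /\
  (~~ odd n -> A 1%N + A n = A (n %/ 2)%N + A (n %/ 2).+1).
Proof.
move=> n3 dist hs.
have step : forall i, (1 <= i)%N -> (i.+2 <= n)%N -> A i.+2 - A i.+1 = A i.+1 - A i.
  move=> i i1 i2.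
  have h1 : (1 <= i < n)%N by lia.
  have h2 : (1 <= i.+1 < n)%N by lia.
  have neq : A i.+2 <> A i.
    move=> e; have := dist _ _ _ _ e; lia.
  case: (hs _ h1) => e1; case: (hs _ h2) => e2.
  - by rewrite e1 e2.
  - exfalso; apply: neq; apply/eqP; rewrite -subr_eq0.
    have -> : A i.+2 - A i = (A i.+2 - A i.+1) + (A i.+1 - A i) by rewrite addrA subrK.
    by rewrite e1 e2 addNr.
  - exfalso; apply: neq; apply/eqP; rewrite -subr_eq0.
    have -> : A i.+2 - A i = (A i.+2 - A i.+1) + (A i.+1 - A i) by rewrite addrA subrK.
    by rewrite e1 e2 addrN.
  - by rewrite e1 e2.
set e := A 2%N - A 1%N.
have De : forall i, (1 <= i < n)%N -> A i.+1 - A i = e.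
  elim=> [|i IH] //; case: i IH => [|i] IH hi; first by [].
  rewrite step //; first (apply: IH); lia.
have Ae : forall i, (i.+1 <= n)%N -> A i.+1 = A 1%N + e *+ i.
  elim=> [|i IH] hi; first by rewrite mulr0n addr0.
  have := De i.+1 ltac:(lia); rewrite IH; last lia.
  move/eqP; rewrite subr_eq => /eqP ->. by rewrite mulrS addrCA.
have En : A n = A 1%N + e *+ n.-1.
  have := Ae n.-1; rewrite prednK; last lia.
  by move=> ->; last lia.
split=> hn.
- have [k hk] : exists k, n = (k + k).+1 by exists (n %/ 2)%N; lia.
  rewrite En (_ : (n.+1 %/ 2 = k.+1)%N); last lia.
  rewrite [A k.+1]Ae; last lia.
  rewrite hk /= mulrnDr mulr2n addrACA; exact: addrA.
- have [k hk] : exists k, n = (k + k.+1).+1 by exists (n %/ 2).-1; lia.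
  rewrite En (_ : (n %/ 2 = k.+1)%N); last lia.
  rewrite [A k.+1]Ae ?[A k.+2]Ae; try lia.
  rewrite hk /= mulrnDr addrACA; exact: addrA.
Qed.

Lemma zm_rep_eq (m : nat) (P : 'Z_m) (p : int) :
  (1 < m)%N -> zm_rep P p -> P = p%:~R.
Proof.
move=> m1 /eqP h.
rewrite [p](divz_eq p m) h intrD intrM /=.
have -> : ((m%:Z)%:~R : 'Z_m) = 0.
  by apply: val_inj; rewrite /= val_Zp_nat // modnn.
rewrite mulr0 add0r; apply: val_inj; rewrite /= val_Zp_nat // modn_small //.
by apply: (leq_trans (ltn_ord P)); rewrite Zp_cast.
Qed.

Theorem lemma3p2 :
  (forall (n : nat) (A : nat -> int),
    (3 <= n)%N ->
    (forall i j : nat, (1 <= i <= n)%N -> (1 <= j <= n)%N -> A i = A j -> i = j) ->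
    (exists d : nat, forall i : nat, (1 <= i < n)%N -> cZ (A i) (A i.+1) = d) ->
    (odd n -> A 1%N + A n = A (n.+1 %/ 2)%N *+ 2) /\
    (~~ odd n -> A 1%N + A n = A (n %/ 2)%N + A (n %/ 2).+1)) /\
  (forall (m n : nat) (A : nat -> 'Z_m),
    (1 < m)%N ->
    (3 <= n)%N ->
    (forall i j : nat, (1 <= i <= n)%N -> (1 <= j <= n)%N -> A i = A j -> i = j) ->
    (exists d : nat, forall i : nat, (1 <= i < n)%N -> cZm_is (A i) (A i.+1) d) ->
    (odd n -> A 1%N + A n = A (n.+1 %/ 2)%N *+ 2) /\
    (~~ odd n -> A 1%N + A n = A (n %/ 2)%N + A (n %/ 2).+1)).
Proof.
split.
- move=> n A n3 dist [d hd]; apply: (@gen_ap _ n A (d%:Z)) => // i hi.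
  have := hd i hi; rewrite /cZ => h.
  have : `|A i.+1 - A i|%N = d by rewrite distnC.
  lia.
- move=> m n A m1 n3 dist [d hd]; apply: (@gen_ap _ n A ((d%:Z)%:~R)) => // i hi.
  have [[p [q [hp [hq hpq]]]] _] := hd i hi.
  rewrite (@zm_rep_eq _ _ _ m1 hp) (@zm_rep_eq _ _ _ m1 hq) -intrB.
  have : q - p = d%:Z \/ q - p = - d%:Z by lia.
  by case=> ->; [left | right; rewrite intrN].
Qed.
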